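(* Let $i$ be a positive integer and let $C$ be an $\mathbb{F}$-linear $[n,k,d]$-code with ordered basis $B$. (a) ${\sf Code}(B,i)$ is an $\mathbb{F}$-linear $[n_i,k_i,d_i]$-code with \[ n_i=n\prod_{j=1}^{i}(k+j),\qquad k_i=k+i,\qquad d_i\ge d\prod_{j=1}^{i}(k+j-1). \] (b) Suppose that $C$ is $u$-bounded relative to $B$ for a positive integer $u$ satisfying $u\ge d(1+ik^{-1})$. Then \[ d_i=d\prod_{j=1}^{i}(k+j). \] Moreover, setting $u_i=u\prod_{j=1}^{i}(k+j-1)$, the code ${\sf Code}(B,i)$ is $u_i$-bounded relative to ${\sf Basis}(B,i)$ if and only if $u\ge d(1+(i+1)k^{-1})$.
   Context: $\mathbb{F}$ is an arbitrary field and vectors in $\mathbb{F}^n$ are column vectors. The weight $\mathrm{wt}(x)$ of $x\in\mathbb{F}^n$ is its number of nonzero coordinates. An $[n,k,d]$-code is a $k$-dimensional subspace of $\mathbb{F}^n$ whose minimum distance (the minimum weight of a nonzero codeword) is $d$. Boundedness: let $u$ be a positive integer and let $C$ be an $[n,k,d]$-code with ordered basis $B=(a_1,\dots,a_k)$. Then $C$ is $u$-bounded relative to $B$ if all three of the following hold: (i) $\mathrm{wt}(a_j)=u$ for every $j$; (ii) $\mathrm{wt}\big(\sum_{j=1}^k a_j\big)=d$; (iii) $u\ge d(1+k^{-1})$. Construction: for an ordered basis $B=(a_1,\dots,a_k)$ of a code $C\le\mathbb{F}^n$, set $a_0:=0\in\mathbb{F}^n$. For $m=1,\dots,k+1$,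 let $a'_m\in\mathbb{F}^{n(k+1)}$ be the column vector made of $k+1$ blocks of length $n$. Its $r$-th block, for $r=1,\dots,k+1$, is $a_{r-m}$, where the subscript is read modulo $k+1$ with representatives in $\{0,\dots,k\}$. Thus $a'_1=(0,a_1,\dots,a_k)^T$, $a'_2=(a_k,0,a_1,\dots,a_{k-1})^T$, …, $a'_{k+1}=(a_1,\dots,a_k,0)^T$ in block form. Define ${\sf Basis}(B)=(a'_1,\dots,a'_{k+1})$, and let ${\sf Code}(B)\le\mathbb{F}^{n(k+1)}$ be its $\mathbb{F}$-linear span. ${\sf Basis}(B)$ is an ordered basis of ${\sf Code}(B)$. Iteration: ${\sf Code}(B,1)={\sf Code}(B)$ and ${\sf Basis}(B,1)={\sf Basis}(B)$. For $i\ge2$, ${\sf Code}(B,i)={\sf Code}({\sf Basis}(B,i-1))$ and ${\sf Basis}(B,i)={\sf Basis}({\sf Basis}(B,i-1))$. *)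

(* Defs.v *)
(* Codes are row spaces of matrices over a field F;
   vectors of F^n are represented as row vectors 'rV[F]_n (transpose of the
   paper's column convention; immaterial). An ordered basis (a_1,...,a_k) of a
   code is a k x n matrix whose j-th row is a_j. *)
From HB Require Import structures.
From mathcomp Require Import all_boot all_order all_algebra.
Set Implicit Arguments. Unset Strict Implicit. Unset Printing Implicit Defensive.
Import GRing.Theory.
Local Open Scope ring_scope.

Section Codes.
Variable F : fieldType.

Definition wt n (x : 'rV[F]_n) : nat := #|[set j : 'I_n | x 0 j != 0]|.

Definition is_mindist m n (C : 'M[F]_(m, n)) (d : nat) : Prop :=
  (exists x : 'rV[F]_n, [/\ (x <= C)%MS, x != 0 & wt x = d]) /\
  (forall x : 'rV[F]_n, (x <= C)%MS -> x != 0 -> (d <= wt x)%N).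

(* the code spanned by the rows of B (m rows) is u-bounded relative to B:
   (i) wt(a_j) = u, (ii) wt(sum a_j) = d, (iii) u >= d(1 + 1/m) i.e. u*m >= d*(m+1) *)
Definition u_bounded m n (B : 'M[F]_(m, n)) (u : nat) : Prop :=
  exists2 d, is_mindist B d &
    [/\ forall j : 'I_m, wt (row j B) = u,
        wt (\sum_(j < m) row j B) = d
      & (d * m.+1 <= u * m)%N].

(* entry t (0-based) of a_{s+1}, or 0 if out of range *)
Definition blk m p (B : 'M[F]_(m, p)) (s t : nat) : F :=
  match (insub s : option 'I_m), (insub t : option 'I_p) with
  | Some a, Some b => B a b
  | _, _ => 0
  end.

(* Basis(B): row r (0-based, i.e. a'_{r+1}) has in block b (0-based, i.e. the
   (b+1)-th block) the vector a_{(b - r) mod (m+1)}, with a_0 = 0. *)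
Definition Basis m p (B : 'M[F]_(m, p)) : 'M[F]_(m.+1, m.+1 * p) :=
  \matrix_(r < m.+1, c < m.+1 * p)
    (let s := (((c %/ p) + m.+1 - r) %% m.+1)%N in
     if s == 0%N then 0 else blk B s.-1 (c %% p)%N).

Fixpoint Ndim (n k i : nat) : nat :=
  match i with 0 => n | i'.+1 => (i' + k).+1 * Ndim n k i' end.

Fixpoint BasisIter k n (B : 'M[F]_(k, n)) (i : nat) : 'M[F]_(i + k, Ndim n k i) :=
  match i return 'M[F]_(i + k, Ndim n k i) with
  | 0 => B
  | i'.+1 => Basis (BasisIter B i')
  end.

End Codes.

(* Main.v *)
Require Import Defs.
From HB Require Import structures.
From mathcomp Require Import all_boot all_order all_algebra zify.
From Stdlib Require Import Classical.
Set Implicit Arguments. Unset Strict Implicit. Unset Printing Implicit Defensive.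
Import GRing.Theory.
Local Open Scope ring_scope.



Lemma wtE (F : fieldType) q (x : 'rV[F]_q) : wt x = (\sum_j (x 0%R j != 0%R : nat))%N.
Proof.
rewrite /wt -sum1_card big_mkcond /=; apply: eq_bigr => j _.
by rewrite inE; case: (x 0 j != 0).
Qed.

Lemma col_subproof m p (b : 'I_m.+1) (t : 'I_p) : (b * p + t < m.+1 * p)%N.
Proof. have := ltn_ord b; have := ltn_ord t; nia. Qed.

Definition colI m p (b : 'I_m.+1) (t : 'I_p) : 'I_(m.+1 * p) := Ordinal (@col_subproof m p b t).

Lemma sum_split m p (f : 'I_(m.+1 * p) -> nat) :
  (\sum_c f c = \sum_(b < m.+1) \sum_(t < p) f (@colI m p b t))%N.
Proof.
move: f; case: p => [|p'] f.
  rewrite big1 => [|c _]; last by have := ltn_ord c; rewrite {2}muln0.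
  by rewrite big1 // => b _; rewrite big_ord0.
rewrite pair_big /=.
rewrite (reindex (fun q : 'I_m.+1 * 'I_p'.+1 => @colI m p'.+1 q.1 q.2)) //.
exists (fun c : 'I_(m.+1 * p'.+1) => (inord (c %/ p'.+1) : 'I_m.+1, inord (c %% p'.+1) : 'I_p'.+1)).
  move=> [b t] _ /=.
  congr (_, _); apply: val_inj; rewrite /= inordK.
  - by rewrite divnMDl // divn_small ?addn0.
  - by rewrite divnMDl // divn_small ?addn0.
  - by rewrite modnMDl modn_small.
  - by rewrite modnMDl modn_small.
move=> c _.
apply: val_inj => /=; rewrite !inordK ?ltn_pmod // -?divn_eq //.
by rewrite ltn_divLR //; exact: ltn_ord.
Qed.


Definition gB (F : fieldType) m p (B : 'M[F]_(m, p)) (s : 'I_m.+1) (t : 'I_p) : F :=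
  if s == 0 then 0 else blk B s.-1 t.

Definition grow (F : fieldType) m p (B : 'M[F]_(m, p)) (s : 'I_m.+1) : 'rV[F]_p :=
  \row_t gB B s t.

Definition blkv (F : fieldType) m p (x : 'rV[F]_(m.+1 * p)) (b : 'I_m.+1) : 'rV[F]_p :=
  \row_t x 0 (colI b t).

Definition wv (F : fieldType) m (c : 'rV[F]_m.+1) (b : 'I_m.+1) : 'rV[F]_m :=
  \row_j c 0 (b - lift ord0 j).

Lemma subZp m (b r : 'I_m.+1) : val (b - r) = ((b + m.+1 - r) %% m.+1)%N.
Proof. rewrite /= modnDmr addnBA //. exact: ltnW (ltn_ord r). Qed.

Lemma basis_col (F : fieldType) m p (B : 'M[F]_(m, p)) r b t :
  Basis B r (colI b t) = gB B (b - r) t.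
Proof.
have pp : (0 < p)%N by case: p t B => [[]|].
rewrite mxE /= divnMDl // (divn_small (ltn_ord t)) addn0 modnMDl (modn_small (ltn_ord t)).
by rewrite /gB -subZp.
Qed.

Lemma blkE (F : fieldType) m p (B : 'M[F]_(m, p)) (j : 'I_m) (t : 'I_p) :
  blk B j t = B j t.
Proof. by rewrite /blk !valK. Qed.

Lemma grow0 (F : fieldType) m p (B : 'M[F]_(m, p)) : grow B 0 = 0.
Proof. by apply/rowP => t; rewrite !mxE /gB eqxx. Qed.

Lemma growS (F : fieldType) m p (B : 'M[F]_(m, p)) j : grow B (lift ord0 j) = row j B.
Proof. by apply/rowP => t; rewrite !mxE /gB /= blkE. Qed.

Lemma wt_split (F : fieldType) m p (x : 'rV[F]_(m.+1 * p)) :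
  wt x = (\sum_b wt (blkv x b))%N.
Proof.
rewrite wtE sum_split; apply: eq_bigr => b _; rewrite wtE.
by apply: eq_bigr => t _; rewrite mxE.
Qed.

Lemma blkv_mul (F : fieldType) m p (B : 'M[F]_(m, p)) (c : 'rV[F]_m.+1) b :
  blkv (c *m Basis B) b = wv c b *m B.
Proof.
apply/rowP => t; rewrite !mxE.
under eq_bigr do rewrite basis_col.
rewrite (reindex_inj (subrI b)) /= big_ord_recl /=.
rewrite subKr {1}/gB eqxx mulr0 add0r.
apply: eq_bigr => j _; rewrite mxE subKr /gB /= blkE //.
Qed.

Lemma blkv_row (F : fieldType) m p (B : 'M[F]_(m, p)) r b :
  blkv (row r (Basis B)) b = grow B (b - r).
Proof. by apply/rowP => t; rewrite mxE [in LHS]mxE basis_col mxE. Qed.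

Lemma wt_row_basis (F : fieldType) m p (B : 'M[F]_(m, p)) r :
  wt (row r (Basis B)) = (\sum_j wt (row j B))%N.
Proof.
rewrite wt_split.
under eq_bigr do rewrite blkv_row.
rewrite (reindex_inj (addIr r)) /=.
under eq_bigr do rewrite addrK.
rewrite big_ord_recl grow0 /=.
have -> : wt (0 : 'rV[F]_p) = 0%N by rewrite /wt; apply/eqP; rewrite cards_eq0; apply/eqP/setP => j; rewrite !inE mxE eqxx.
by rewrite add0n; apply: eq_bigr => j _; rewrite growS.
Qed.

Lemma sum_rows_const (F : fieldType) q n (A : 'M[F]_(q, n)) :
  \sum_r row r A = const_mx 1 *m A.
Proof. by rewrite mulmx_sum_row; apply: eq_bigr => r _; rewrite mxE scale1r. Qed.

Lemma wt_sum_basis (F : fieldType) m p (B : 'M[F]_(m, p)) :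
  wt (\sum_r row r (Basis B)) = (m.+1 * wt (\sum_j row j B))%N.
Proof.
rewrite sum_rows_const wt_split.
under eq_bigr do rewrite blkv_mul.
have H : forall b, wv (const_mx 1 : 'rV[F]_m.+1) b = const_mx 1.
  by move=> b; apply/rowP => j; rewrite !mxE.
under eq_bigr do rewrite H.
by rewrite -sum_rows_const sum_nat_const card_ord.
Qed.


Lemma wt0 (F : fieldType) q : wt (0 : 'rV[F]_q) = 0%N.
Proof. by rewrite /wt; apply/eqP; rewrite cards_eq0; apply/eqP/setP => j; rewrite !inE mxE eqxx. Qed.

Lemma wtZ (F : fieldType) q (a : F) (x : 'rV[F]_q) : a != 0 -> wt (a *: x) = wt x.
Proof.
move=> a0; rewrite /wt; apply: eq_card => j; rewrite !inE mxE.
by rewrite mulf_eq0 negb_or a0.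
Qed.

Lemma wv_eq0 (F : fieldType) m (c : 'rV[F]_m.+1) b r :
  wv c b = 0 -> r != b -> c 0 r = 0.
Proof.
move=> /rowP H rb.
have : ord0 != b - r :> 'I_m.+1 by rewrite eq_sym subr_eq0 eq_sym.
case/unlift_some => j Hj _.
by have := H j; rewrite !mxE -Hj subKr.
Qed.

Lemma wv_eq0_delta (F : fieldType) m (c : 'rV[F]_m.+1) b :
  wv c b = 0 -> c = c 0 b *: 'e_b.
Proof.
move=> H; apply/rowP => r; rewrite !mxE eqxx /=.
case: (eqVneq r b) => [->|rb]; first by rewrite mulr1.
by rewrite (wv_eq0 H rb) mulr0.
Qed.

Lemma wv_eq0_2 (F : fieldType) m (c : 'rV[F]_m.+1) b b' :
  wv c b = 0 -> wv c b' = 0 -> b != b' -> c = 0.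
Proof.
move=> H H' bb; apply/rowP => r; rewrite mxE.
case: (eqVneq r b) => [->|rb]; last exact: wv_eq0 H rb.
by apply: wv_eq0 H' _.
Qed.

Lemma Basis_rfree (F : fieldType) m p (B : 'M[F]_(m, p)) :
  (0 < m)%N -> row_free B -> row_free (Basis B).
Proof.
move=> m0 fB; apply: inj_row_free => c Hc.
case: (boolP [exists b, wv c b != 0]) => [/existsP [b Hb]|]; last first.
  rewrite negb_exists => /forallP H.
  have H' : forall b, wv c b = 0 by move=> b; apply/eqP/negPn; exact: H.
  apply: (wv_eq0_2 (H' ord0) (H' (lift ord0 (Ordinal m0)))).
  exact: neq_lift.
have := blkv_mul B c b; rewrite Hc.
have -> : blkv (0 : 'rV[F]_(m.+1 * p)) b = 0 by apply/rowP => t; rewrite !mxE.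
by move=> /esym /eqP; rewrite mulmx_free_eq0 // (negPf Hb).
Qed.

Lemma keyK (F : fieldType) m p (B : 'M[F]_(m, p)) (dl : nat) (x : 'rV[F]_(m.+1 * p)) :
  row_free B -> (forall y : 'rV[F]_p, (y <= B)%MS -> y != 0 -> (dl <= wt y)%N) ->
  (x <= Basis B)%MS -> x != 0 ->
  (m.+1 * dl <= wt x)%N \/ wt x = (\sum_j wt (row j B))%N.
Proof.
move=> fB Hd /submxP [c ->] x0.
case: (boolP [forall b, wv c b != 0]) => [/forallP H|].
  left; rewrite wt_split; under eq_bigr do rewrite blkv_mul.
  have -> : (m.+1 * dl = \sum_(b < m.+1) dl)%N by rewrite sum_nat_const card_ord.
  apply: leq_sum => b _; apply: Hd; first exact: submxMl.
  by rewrite mulmx_free_eq0 // H.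
rewrite negb_forall => /existsP [b]; rewrite negbK => /eqP H.
right; rewrite (wv_eq0_delta H) -scalemxAl -rowE wtZ ?wt_row_basis //.
apply: contraNneq x0 => c0; rewrite (wv_eq0_delta H) c0 scale0r mul0mx //.
Qed.

Lemma rows_lb (F : fieldType) m p (B : 'M[F]_(m, p)) (dl : nat) :
  row_free B -> (forall y : 'rV[F]_p, (y <= B)%MS -> y != 0 -> (dl <= wt y)%N) ->
  (m * dl <= \sum_j wt (row j B))%N.
Proof.
move=> fB Hd; have -> : (m * dl = \sum_(b < m) dl)%N by rewrite sum_nat_const card_ord.
apply: leq_sum => j _; apply: Hd; first exact: row_sub.
rewrite rowE mulmx_free_eq0 //; apply/eqP => /rowP /(_ j); rewrite !mxE !eqxx /=.
exact/eqP/oner_neq0.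
Qed.


Lemma wt_gt0 (F : fieldType) q (x : 'rV[F]_q) : x != 0 -> (0 < wt x)%N.
Proof.
move=> x0; rewrite /wt card_gt0; apply: contraNneq x0 => /setP H.
apply/eqP/rowP => j; move: (H j); rewrite !inE mxE => /negbFE /eqP //.
Qed.

Lemma mindist_unique (F : fieldType) q n (C : 'M[F]_(q, n)) d1 d2 :
  is_mindist C d1 -> is_mindist C d2 -> d1 = d2.
Proof.
move=> [[x1 [s1 n1 w1]] H1] [[x2 [s2 n2 w2]] H2].
apply/eqP; rewrite eqn_leq; apply/andP; split; [rewrite -w2; exact: H1 | rewrite -w1; exact: H2].
Qed.

Lemma mindist_exists (F : fieldType) q n (C : 'M[F]_(q, n)) (x : 'rV[F]_n) :
  (x <= C)%MS -> x != 0 -> exists d, is_mindist C d.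
Proof.
move=> sx x0.
suff : forall N (y : 'rV[F]_n), (wt y <= N)%N -> (y <= C)%MS -> y != 0 -> exists d, is_mindist C d.
  by move/(_ (wt x) x (leqnn _) sx x0).
elim=> [|N IH] y Hy sy y0.
  by move: (wt_gt0 y0); rewrite leqn0 in Hy; rewrite (eqP Hy).
case: (classic (exists z : 'rV[F]_n, [/\ (z <= C)%MS, z != 0 & (wt z < wt y)%N])).
  case=> z [sz z0 lt]; apply: (IH z) => //; rewrite -ltnS; exact: leq_trans lt Hy.
move=> H; exists (wt y); split; first by exists y.
move=> z sz z0; rewrite leqNgt; apply/negP => lt; apply: H; by exists z.
Qed.

Lemma mindist_k (F : fieldType) k n (B : 'M[F]_(k, n)) d : is_mindist B d -> (0 < k)%N.
Proof.
move=> [[x [sx x0 _]] _].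
have := mxrankS sx; have := rank_leq_row B.
have : (0 < \rank x)%N by rewrite lt0n mxrank_eq0.
lia.
Qed.

Lemma lb_step (F : fieldType) m p (B : 'M[F]_(m, p)) (dl : nat) :
  row_free B -> (forall y : 'rV[F]_p, (y <= B)%MS -> y != 0 -> (dl <= wt y)%N) ->
  forall x, (x <= Basis B)%MS -> x != 0 -> (m * dl <= wt x)%N.
Proof.
move=> fB Hd x sx x0; case: (keyK fB Hd sx x0) => [H|->].
  by apply: leq_trans H; rewrite leq_mul2r leqnSn orbT.
exact: rows_lb.
Qed.

Lemma bounded_step (F : fieldType) m p (B : 'M[F]_(m, p)) (d u : nat) :
  row_free B -> is_mindist B d -> (forall j, wt (row j B) = u) ->
  wt (\sum_j row j B) = d -> (d * m.+1 <= u * m)%N ->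
  [/\ is_mindist (Basis B) (m.+1 * d),
      forall r, wt (row r (Basis B)) = (m * u)%N
    & wt (\sum_r row r (Basis B)) = (m.+1 * d)%N].
Proof.
move=> fB Hmd Hrow Hsum Hineq.
have Hrows : forall r, wt (row r (Basis B)) = (m * u)%N.
  move=> r; rewrite wt_row_basis; under eq_bigr do rewrite Hrow.
  by rewrite sum_nat_const card_ord.
have Hs : wt (\sum_r row r (Basis B)) = (m.+1 * d)%N by rewrite wt_sum_basis Hsum.
split=> //; split.
  exists (\sum_r row r (Basis B)); split=> //.
    by apply: summx_sub => r _; exact: row_sub.
  case: Hmd => [[x [_ x0 wx]] _].
  apply/eqP => H; move: Hs; rewrite H wt0 => /esym /eqP; rewrite muln_eq0 /=.
  by rewrite -wx; have := wt_gt0 x0; case: (wt x).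
move=> x sx x0; case: Hmd => [_ Hd].
case: (keyK fB Hd sx x0) => [//|->].
under eq_bigr do rewrite Hrow.
rewrite sum_nat_const card_ord; lia.
Qed.


Lemma PS k i : (\prod_(1 <= j < i.+2) (k + j) = \prod_(1 <= j < i.+1) (k + j) * (k + i.+1))%N.
Proof. by rewrite big_nat_recr. Qed.

Lemma P1S k i : (\prod_(1 <= j < i.+2) (k + j - 1) = \prod_(1 <= j < i.+1) (k + j - 1) * (k + i))%N.
Proof. by rewrite big_nat_recr //= addnS subn1. Qed.

Lemma P0 k : (\prod_(1 <= j < 1) (k + j) = 1)%N.
Proof. by rewrite big_geq. Qed.

Lemma P10 k : (\prod_(1 <= j < 1) (k + j - 1) = 1)%N.
Proof. by rewrite big_geq. Qed.

Lemma P_pos k i : (0 < \prod_(1 <= j < i.+1) (k + j))%N.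
Proof. rewrite big_seq_cond; apply: prodn_cond_gt0 => j /andP [] + _; rewrite mem_index_iota; lia. Qed.

Lemma P1P k i : (\prod_(1 <= j < i.+1) (k + j - 1) * (k + i) = k * \prod_(1 <= j < i.+1) (k + j))%N.
Proof.
elim: i => [|i IH]; first by rewrite P10 P0 addn0 mul1n muln1.
by rewrite P1S PS mulnA -IH.
Qed.

Lemma Ndim_eq n k i : Ndim n k i = (n * \prod_(1 <= j < i.+1) (k + j))%N.
Proof.
elim: i => [|i IH]; first by rewrite P0 muln1.
rewrite /= IH PS; lia.
Qed.

Lemma partA (F : fieldType) n k d (B : 'M[F]_(k, n)) :
  row_free B -> is_mindist B d -> forall i,
  row_free (BasisIter B i) /\
  (forall x, (x <= BasisIter B i)%MS -> x != 0 ->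
     (d * \prod_(1 <= j < i.+1) (k + j - 1) <= wt x)%N).
Proof.
move=> fB Hmd; have k0 := mindist_k Hmd.
elim=> [|i [fBi Hi]].
  by split=> // x sx x0; rewrite P10 muln1; case: Hmd => _; apply.
split; first by apply: (Basis_rfree (B:=BasisIter B i)) => //; rewrite addn_gt0 k0 orbT.
move=> x sx x0; have := lb_step fBi Hi sx x0.
rewrite P1S; move: (\prod_(1 <= j < i.+1) (k + j - 1))%N => P.
move=> H; apply: leq_trans _ H; nia.
Qed.

Lemma partQ (F : fieldType) n k d (B : 'M[F]_(k, n)) u :
  row_free B -> is_mindist B d -> u_bounded B u -> forall i,
  (d * (k + i) <= u * k)%N ->
  [/\ is_mindist (BasisIter B i) (d * \prod_(1 <= j < i.+1) (k + j)),
      forall r, wt (row r (BasisIter B i)) = (u * \prod_(1 <= j < i.+1) (k + j - 1))%N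
    & wt (\sum_r row r (BasisIter B i)) = (d * \prod_(1 <= j < i.+1) (k + j))%N].
Proof.
move=> fB Hmd [d' Hmd' [Hrow Hsum Hin]].
have dd := mindist_unique Hmd' Hmd; subst d'.
elim=> [|i IH] Hi.
  by rewrite P0 P10 !muln1.
have [Hm Hr Hs] : [/\ is_mindist (BasisIter B i) (d * \prod_(1 <= j < i.+1) (k + j)),
      forall r, wt (row r (BasisIter B i)) = (u * \prod_(1 <= j < i.+1) (k + j - 1))%N
    & wt (\sum_r row r (BasisIter B i)) = (d * \prod_(1 <= j < i.+1) (k + j))%N].
  by apply: IH; apply: leq_trans Hi; rewrite leq_mul2l addnS leqnSn orbT.
have fBi := (partA fB Hmd i).1.
have Hineq : (d * \prod_(1 <= j < i.+1) (k + j) * (i + k).+1 <=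
              u * \prod_(1 <= j < i.+1) (k + j - 1) * (i + k))%N.
  have := P1P k i; have := P_pos k i.
  move: Hi; set P := (\prod_(1 <= j < i.+1) (k + j))%N; set P1 := (\prod_(1 <= j < i.+1) (k + j - 1))%N.
  move=> Hi Pp E.
  have -> : (u * P1 * (i + k) = u * k * P)%N by rewrite -mulnA [(i + k)%N]addnC E mulnA.
  have -> : (d * P * (i + k).+1 = d * (k + i.+1) * P)%N.
    by rewrite -!mulnA [(P * _)%N]mulnC addnS addnC.
  exact: leq_mul Hi (leqnn P).
have [H1 H2 H3] := bounded_step fBi Hm Hr Hs Hineq.
split.
- by rewrite PS; move: H1; congr is_mindist; lia.
- by move=> r; rewrite /= H2 P1S; lia.
- by rewrite /= H3 PS; lia.
Qed.

Lemma ineq_iff k i d u :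
  (d * \prod_(1 <= j < i.+1) (k + j) * (i + k).+1 <=
   u * \prod_(1 <= j < i.+1) (k + j - 1) * (i + k))%N =
  (d * (k + i.+1) <= u * k)%N.
Proof.
have := P1P k i; have := P_pos k i.
set P := (\prod_(1 <= j < i.+1) (k + j))%N; set P1 := (\prod_(1 <= j < i.+1) (k + j - 1))%N.
move=> Pp E.
have -> : (u * P1 * (i + k) = u * k * P)%N by rewrite -mulnA [(i + k)%N]addnC E mulnA.
have -> : (d * P * (i + k).+1 = d * (k + i.+1) * P)%N.
  by rewrite -!mulnA [(P * _)%N]mulnC addnS addnC.
by rewrite leq_pmul2r.
Qed.

Unset Implicit Arguments. Set Strict Implicit.

Theorem proposition3p5 (F : fieldType) (n k d i : nat) (B : 'M[F]_(k, n)) :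
  (0 < i)%N -> row_free B -> is_mindist B d ->
  [/\ Ndim n k i = (n * \prod_(1 <= j < i.+1) (k + j))%N,
      \rank (BasisIter B i) = (k + i)%N,
      exists2 di, is_mindist (BasisIter B i) di &
        (d * \prod_(1 <= j < i.+1) (k + j - 1) <= di)%N
    & forall u di : nat, (0 < u)%N -> u_bounded B u ->
        (d * (k + i) <= u * k)%N ->
        is_mindist (BasisIter B i) di ->
        di = (d * \prod_(1 <= j < i.+1) (k + j))%N /\
        (u_bounded (BasisIter B i) (u * \prod_(1 <= j < i.+1) (k + j - 1))
           <-> (d * (k + i.+1) <= u * k)%N)].
Proof.
move=> i0 fB Hmd.
have k0 := mindist_k Hmd.
have [fBi Hlb] := partA fB Hmd i.
split.
- exact: Ndim_eq.
- by rewrite (eqP fBi) addnC.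
- have M0 : BasisIter B i != 0.
    by rewrite -mxrank_eq0 (eqP fBi) addn_eq0 negb_and -!lt0n k0 orbT.
  have [x [sx x0]] : exists x : 'rV[F]_(Ndim n k i), (x <= BasisIter B i)%MS /\ x != 0.
    case: (boolP [exists r, row r (BasisIter B i) != 0]) => [/existsP [r Hr]|].
      by exists (row r (BasisIter B i)); split => //; exact: row_sub.
    rewrite negb_exists => /forallP H; case/eqP: M0; apply/row_matrixP => r.
    by rewrite row0; apply/eqP; move: (H r); rewrite negbK.
  have [di Hdi] := mindist_exists sx x0.
  exists di => //; case: Hdi => [[y [sy y0 <-]] _]; exact: Hlb.
move=> u di u0 Hu Hi Hdi.
have [Hm Hr Hs] := partQ fB Hmd Hu Hi.
have -> := mindist_unique Hdi Hm.
split => //; split.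
  case=> d' Hd' [_ Hs' Hin]; rewrite (mindist_unique Hd' Hm) in Hin.
  by rewrite -ineq_iff.
move=> Hi1; exists (d * \prod_(1 <= j < i.+1) (k + j))%N => //; split => //.
by rewrite ineq_iff.
Qed.
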